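(* Let $R$ be a ring with identity, ${}_RM$ a finitely generated semisimple left $R$-module, $\varphi:M\to M$ a nilpotent $R$-endomorphism, and $\{x_{\gamma,i}\mid\gamma\in\Gamma,1\le i\le k_\gamma\}$ a nilpotent Jordan normal base of ${}_RM$ with respect to $\varphi$, with $\Gamma$ finite. Let $\Phi:(R[t])^\Gamma\to M$, $\Phi(\mathbf f)=\sum_{\gamma\in\Gamma}f_\gamma(t)\ast x_{\gamma,1}$, \[\mathcal M(\Phi)=\{\mathbf P\in M_{\Gamma\times\Gamma}(R[t])\mid \mathbf f\mathbf P\in\ker(\Phi)\text{ for all }\mathbf f\in\ker(\Phi)\},\] \[\mathcal V(k_\gamma,\gamma\in\Gamma)=\{\mathbf P=[p_{\delta,\gamma}(t)]\in M_{\Gamma\times\Gamma}(R[t])\mid \deg(p_{\delta,\gamma}(t))\le k_\gamma-1\text{ for all }\delta,\gamma\in\Gamma\}.\] If $\psi:M\to M$ is an $R$-endomorphism with $\psi\circ\varphi=\varphi\circ\psi$, then there exists $\mathbf P\in\mathcal M(\Phi)\cap\mathcal V(k_\gamma,\gamma\in\Gamma)$ such that $\psi(\Phi(\mathbf f))=\Phi(\mathbf f\mathbf P)$ for all $\mathbf f\in(R[t])^\Gamma$.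
   Context: A nilpotent Jordan normal base of ${}_RM$ with respect to $\varphi$ is a subset $\{x_{\gamma,i}\}$ (integers $k_\gamma\ge1$) such that each $Rx_{\gamma,i}$ is simple, $M=\bigoplus_{\gamma,i}Rx_{\gamma,i}$, $\varphi(x_{\gamma,i})=x_{\gamma,i+1}$ for $i<k_\gamma$, $\varphi(x_{\gamma,k_\gamma})=0$. $R[t]$ is the polynomial ring in a commuting indeterminate; $M$ is a left $R[t]$-module via $(a_1+a_2t+\cdots+a_{n+1}t^n)\ast u=a_1u+a_2\varphi(u)+\cdots+a_{n+1}\varphi^n(u)$. Elements of $(R[t])^\Gamma$ are $1\times\Gamma$ row vectors and $\mathbf f\mathbf P$ is the matrix product. *)

(* Defs.v *)
From HB Require Import structures.
From mathcomp Require Import all_boot all_order all_algebra.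
Set Implicit Arguments. Unset Strict Implicit. Unset Printing Implicit Defensive.
Import Order.TTheory GRing.Theory.
Local Open Scope ring_scope.

Section ModuleNotions.
Variables (R : nzRingType) (M : lmodType R).

Definition submodule (S : M -> Prop) : Prop :=
  [/\ S 0, (forall u v, S u -> S v -> S (u + v)) & (forall (r : R) u, S u -> S (r *: u))].

Definition cyclic_submod (x : M) : M -> Prop := fun u => exists r : R, u = r *: x.

Definition simple_submod (S : M -> Prop) : Prop :=
  [/\ submodule S, (exists u, S u /\ u <> 0) &
      forall T, submodule T -> (forall u, T u -> S u) ->
        (forall u, T u -> u = 0) \/ (forall u, S u -> T u)].

Definition semisimple_mod : Prop :=
  forall S, submodule S -> exists T, submodule T /\
    (forall u, S u -> T u -> u = 0) /\
    (forall m, exists s t, [/\ S s, T t & m = s + t]).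

Definition fin_gen_mod : Prop :=
  exists s : seq M, forall m, exists c : nat -> R,
    m = \sum_(i < size s) c i *: s`_i.

Definition nilpotent_endo (phi : M -> M) : Prop :=
  exists n, forall m, iter n phi m = 0.

(* The left R[t]-module action: (a_0 + a_1 t + ... ) * u = sum a_i phi^i(u). *)
Definition pact (phi : M -> M) (p : {poly R}) (u : M) : M :=
  \sum_(i < size p) p`_i *: iter i phi u.

(* Nilpotent Jordan normal base {x_{g,i} | g in G, 1 <= i <= k g} of M w.r.t. phi
   (indices i are 1-based natural numbers; values of x outside that range are irrelevant). *)
Definition nilpotent_Jordan_base (G : finType) (k : G -> nat) (x : G -> nat -> M)
    (phi : M -> M) : Prop :=
  (forall g, (1 <= k g)%N) /\
  [/\ forall g i, (1 <= i <= k g)%N -> simple_submod (cyclic_submod (x g i)),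
      forall m, exists c : G -> nat -> R,
        m = \sum_(g : G) \sum_(1 <= i < (k g).+1) c g i *: x g i,
      forall c : G -> nat -> R,
        \sum_(g : G) \sum_(1 <= i < (k g).+1) c g i *: x g i = 0 ->
        forall g i, (1 <= i <= k g)%N -> c g i *: x g i = 0,
      forall g i, (1 <= i < k g)%N -> phi (x g i) = x g i.+1 &
      forall g, phi (x g (k g)) = 0].

End ModuleNotions.

Definition rowprod (R : nzRingType) (G : finType) (f : G -> {poly R})
    (P : G -> G -> {poly R}) : G -> {poly R} :=
  fun g => \sum_(d : G) f d * P d g.

Definition PhiMap (R : nzRingType) (M : lmodType R) (G : finType) (phi : M -> M)
    (x : G -> nat -> M) (f : G -> {poly R}) : M :=
  \sum_(g : G) pact phi (f g) (x g 1%N).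

Definition in_MPhi (R : nzRingType) (M : lmodType R) (G : finType) (phi : M -> M)
    (x : G -> nat -> M) (P : G -> G -> {poly R}) : Prop :=
  forall f : G -> {poly R}, PhiMap phi x f = 0 -> PhiMap phi x (rowprod f P) = 0.

(* V(k_g, g in G): deg p_{d,g} <= k_g - 1, i.e. size p_{d,g} <= k_g *)
Definition in_Vk (R : nzRingType) (G : finType) (k : G -> nat)
    (P : G -> G -> {poly R}) : Prop :=
  forall d g, (size (P d g) <= k g)%N.

(* Main.v *)
Require Import Defs.
From HB Require Import structures.
From mathcomp Require Import all_boot all_order all_algebra.
From Stdlib Require Import IndefiniteDescription.
From mathcomp Require Import zify.
Import GRing.Theory.
Local Open Scope ring_scope.

Section Pact.
Variables (R : nzRingType) (M : lmodType R) (phi : {linear M -> M}).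

Lemma pact_widen (p : {poly R}) u n : (size p <= n)%N ->
  pact phi p u = \sum_(i < n) p`_i *: iter i phi u.
Proof.
move=> hn; rewrite /pact -(subnKC hn) big_split_ord /=.
rewrite [X in _ + X]big1 ?addr0 // => i _.
by rewrite nth_default ?scale0r // leq_addr.
Qed.

Lemma pact0 u : pact phi 0 u = 0.
Proof. by rewrite /pact size_poly0 big_ord0. Qed.

Lemma pactD p q u : pact phi (p + q) u = pact phi p u + pact phi q u.
Proof.
set n := (size p + size q + size (p + q)%R)%N.
have h1 : (size p <= n)%N by rewrite /n; lia.
have h2 : (size q <= n)%N by rewrite /n; lia.
have h3 : (size (p + q)%R <= n)%N by rewrite /n leq_addl.
rewrite !(@pact_widen _ _ n) //.
by rewrite -big_split /=; apply: eq_bigr => i _; rewrite coefD scalerDl.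
Qed.

Lemma pact_sum (I : Type) (r : seq I) (F : I -> {poly R}) u :
  pact phi (\sum_(i <- r) F i) u = \sum_(i <- r) pact phi (F i) u.
Proof.
elim: r => [|a r IH]; first by rewrite !big_nil pact0.
by rewrite !big_cons pactD IH.
Qed.

Lemma iter_lin (f : {linear M -> M}) i : {morph iter i f : a b / a + b} /\
  (forall (c : R) a, iter i f (c *: a) = c *: iter i f a) /\ iter i f 0 = 0.
Proof.
elim: i => [|i [h1 [h2 h3]]] //=; split; [|split].
- by move=> a b; rewrite ?iterS /= h1 linearD.
- by move=> c a; rewrite ?iterS /= h2 linearZ.
- by rewrite ?iterS /= h3 linear0.
Qed.

Lemma pact_addu p a b : pact phi p (a + b) = pact phi p a + pact phi p b.
Proof.
rewrite /pact -big_split /=; apply: eq_bigr => i _.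
by rewrite (proj1 (iter_lin phi i)) scalerDr.
Qed.

Lemma pact_0u p : pact phi p 0 = 0.
Proof.
rewrite /pact big1 // => i _; by rewrite (proj2 (proj2 (iter_lin phi i))) scaler0.
Qed.

Lemma pact_sumu p (I : Type) (r : seq I) (F : I -> M) :
  pact phi p (\sum_(i <- r) F i) = \sum_(i <- r) pact phi p (F i).
Proof.
elim: r => [|a r IH]; first by rewrite !big_nil pact_0u.
by rewrite !big_cons pact_addu IH.
Qed.

Lemma pactC c u : pact phi c%:P u = c *: u.
Proof.
rewrite (@pact_widen _ _ 1) ?size_polyC ?leq_b1 //.
by rewrite big_ord1 coefC /=.
Qed.

Lemma pactCM c q u : pact phi (c%:P * q) u = c *: pact phi q u.
Proof.
set n := (size q + size (c%:P * q)%R)%N.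
rewrite !(@pact_widen _ _ n) /n ?leq_addl ?leq_addr // scaler_sumr.
by apply: eq_bigr => i _; rewrite coefCM scalerA.
Qed.

Lemma pactMX q u : pact phi (q * 'X) u = phi (pact phi q u).
Proof.
set n := (size q + size (q * 'X)%R)%N.
rewrite (@pact_widen _ _ n.+1) ?(@pact_widen q _ n) /n ?leq_addr ?leqW ?leq_addl //.
rewrite big_ord_recl coefMX eqxx scale0r add0r linear_sum.
by apply: eq_bigr => i _; rewrite coefMX /= linearZ.
Qed.

Lemma pact_phi q u : pact phi q (phi u) = phi (pact phi q u).
Proof.
rewrite /pact linear_sum; apply: eq_bigr => i _; rewrite linearZ; congr (_ *: _).
by case: i => i _ /=; elim: i => //= i ->.
Qed.

Lemma pactM p q u : pact phi (p * q) u = pact phi p (pact phi q u).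
Proof.
elim/poly_ind: p q u => [|p c IH] q u; first by rewrite mul0r !pact0.
rewrite mulrDl pactD pactD pactCM pactC -mulrA -(commr_polyX q) IH.
by rewrite !pactMX pact_phi.
Qed.

Lemma pact_comm (psi : {linear M -> M}) p u :
  (forall m, psi (phi m) = phi (psi m)) ->
  psi (pact phi p u) = pact phi p (psi u).
Proof.
move=> hc; rewrite /pact linear_sum; apply: eq_bigr => i _; rewrite linearZ.
by congr (_ *: _); case: i => i _ /=; elim: i => //= i <-; rewrite hc.
Qed.

End Pact.

Theorem lemma4p3 (R : nzRingType) (M : lmodType R)
  (phi : {linear M -> M}) (G : finType) (k : G -> nat) (x : G -> nat -> M)
  (psi : {linear M -> M}) :
  fin_gen_mod M -> semisimple_mod M -> nilpotent_endo phi ->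
  nilpotent_Jordan_base k x phi ->
  (forall m, psi (phi m) = phi (psi m)) ->
  exists P : G -> G -> {poly R},
    [/\ in_MPhi phi x P, in_Vk k P &
        forall f : G -> {poly R}, psi (PhiMap phi x f) = PhiMap phi x (rowprod f P)].
Proof.
move=> _ _ _ [hk [_ hspan _ hphi _]] hc.
have hx : forall g i, (i < k g)%N -> x g i.+1 = iter i phi (x g 1).
  move=> g; elim=> [|i IH] hi //=.
  by rewrite -IH ?(ltnW hi) // hphi.
have [C hC] : exists C : G -> G -> nat -> R, forall d,
    psi (x d 1%N) = \sum_(g : G) \sum_(1 <= i < (k g).+1) C d g i *: x g i.
  have h := fun d => constructive_indefinite_description _ (hspan (psi (x d 1%N))).
  by exists (fun d => proj1_sig (h d)) => d; exact: (proj2_sig (h d)).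
pose P d g := \poly_(i < k g) C d g i.+1.
have hP : forall d, psi (x d 1%N) = \sum_g pact phi (P d g) (x g 1%N).
  move=> d; rewrite hC; apply: eq_bigr => g _.
  rewrite (@pact_widen _ _ _ _ _ (k g)) ?size_poly //.
  rewrite big_add1 /= big_mkord; apply: eq_bigr => i _.
  by rewrite coef_poly ltn_ord hx.
have main : forall f, psi (PhiMap phi x f) = PhiMap phi x (rowprod f P).
  move=> f; rewrite /PhiMap /rowprod linear_sum.
  under eq_bigr => d _ do rewrite pact_comm // hP pact_sumu.
  rewrite exchange_big /=; apply: eq_bigr => g _.
  by rewrite pact_sum; apply: eq_bigr => d _; rewrite pactM.
exists P; split => //.
- by move=> f hf; rewrite -main hf linear0.
- by move=> d g; rewrite size_poly.
Qed.
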